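(* $$\lim_{n\to\infty}\left(\frac{\alpha_n(1\text{-}23\text{-}4)}{n!}\right)^{1/n}=0.$$
   Context: A permutation $\pi=\pi_1\cdots\pi_n$ of $\{1,\dots,n\}$ contains the generalized pattern $1\text{-}23\text{-}4$ if there are indices $a<b<b+1<c$ with $\pi_a<\pi_b<\pi_{b+1}<\pi_c$; otherwise it avoids it. $\alpha_n(1\text{-}23\text{-}4)$ is the number of permutations of $\{1,\dots,n\}$ avoiding it. *)

(* Defs.v *)
From mathcomp Require Import all_boot all_fingroup.
From Stdlib Require Import Reals.
Set Implicit Arguments. Unset Strict Implicit. Unset Printing Implicit Defensive.

(* Permutations of {1..n} are represented as permutations s : 'S_n of {0..n-1};
   positions are 0-based too.  Pattern 1-23-4: indices a < b, b+1 < c with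
   s a < s b < s (b+1) < s c.  *)
Definition contains_1_23_4 (n : nat) (s : 'S_n) : bool :=
  [exists a : 'I_n, exists b : 'I_n, exists b1 : 'I_n, exists c : 'I_n,
     [&& a < b, val b1 == (val b).+1, b1 < c,
         s a < s b, s b < s b1 & s b1 < s c]].

Definition alpha_1_23_4 (n : nat) : nat :=
  #|[set s : 'S_n | ~~ contains_1_23_4 s]|.

(* Main.v *)
Require Import Defs.
From mathcomp Require Import all_boot all_fingroup.
From Stdlib Require Import Reals.
From Stdlib Require Import Lra Psatz.
From mathcomp Require Import ssrnat zify.
Set Implicit Arguments. Unset Strict Implicit. Unset Printing Implicit Defensive.


Definition pv n (s : 'S_n) (i : nat) : nat :=
  if insub i is Some j then val (s j) else 0.

Lemma pvO n (s : 'S_n) i (Hi : i < n) : pv s i = s (Ordinal Hi).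
Proof. by rewrite /pv insubT. Qed.

Lemma pvE n (s : 'S_n) (j : 'I_n) : pv s j = s j.
Proof. by case: j => j Hj; rewrite pvO. Qed.

Lemma pv_neq n (s : 'S_n) i k : i < n -> k < n -> i != k -> pv s i != pv s k.
Proof.
move=> Hi Hk Hik; rewrite (pvO s Hi) (pvO s Hk); apply/negP => /eqP E.
by move/val_inj/perm_inj: E => [] E; rewrite E eqxx in Hik.
Qed.

Definition asc n (s : 'S_n) b : bool := (b.+1 < n) && (pv s b < pv s b.+1).
Definition rr n (s : 'S_n) i := \sum_(0 <= b < i) asc s b.

Lemma rrS n (s : 'S_n) i : rr s i.+1 = rr s i + asc s i.
Proof. by rewrite /rr big_nat_recr. Qed.

Lemma rr_mono n (s : 'S_n) i j : i <= j -> rr s i <= rr s j.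
Proof.
elim: j => [|j IH]; first by rewrite leqn0 => /eqP ->.
rewrite leq_eqVlt => /orP [/eqP -> //| H]; rewrite rrS.
exact: leq_trans (IH H) (leq_addr _ _).
Qed.

Lemma key n (s : 'S_n) p q : p < q -> q < n ->
  rr s p <= rr s q /\ (rr s p = rr s q -> pv s q < pv s p).
Proof.
elim: q => [//|q IH] Hpq Hq.
have Hq' : q < n by lia.
have step : asc s q = false -> pv s q.+1 < pv s q.
  rewrite /asc Hq /= => /negbT; rewrite -leqNgt => H.
  have Hne : q.+1 != q by lia.
  have := pv_neq s Hq Hq' Hne.
  by rewrite ltn_neqAle H andbT => ->.
rewrite rrS; move: Hpq; rewrite ltnS leq_eqVlt => /orP [/eqP ->| Hpq].
  split; first exact: leq_addr.
  move=> E; apply: step; move: E; case: (asc s q) => //=; lia.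
have [H1 H2] := IH Hpq Hq'.
split; first exact: leq_trans H1 (leq_addr _ _).
move=> E; have Ea : asc s q = false by move: E; case: (asc s q) => //=; lia.
rewrite Ea addn0 in E.
exact: ltn_trans (step Ea) (H2 E).
Qed.

Lemma order_rr n (s : 'S_n) (i j : 'I_n) : i != j ->
  (i < j) = (rr s i < rr s j) || ((rr s i == rr s j) && (s j < s i)).
Proof.
move=> Hij; rewrite -!pvE.
case: (ltngtP i j) => H.
- have [H1 H2] := key s H (ltn_ord j).
  case: (ltngtP (rr s i) (rr s j)) => E //=; first lia.
  by rewrite (H2 E).
- have [H1 H2] := key s H (ltn_ord i).
  case: (ltngtP (rr s i) (rr s j)) => E //=; first lia.
  by have := H2 (esym E); lia.
- by move/val_inj: H => H; rewrite H eqxx in Hij.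
Qed.

Definition rho n (s : 'S_n) (u : 'I_n) := rr s (s^-1%g u).

Definition vset n (f : 'I_n -> nat) (v : 'I_n) :=
  [set u : 'I_n | (f u < f v) || ((f u == f v) && (v < u))].

Lemma vset_img n (s : 'S_n) v :
  vset (rho s) v = s @: [set j : 'I_n | j < s^-1%g v].
Proof.
apply/setP => u; rewrite inE.
have -> : u = s (s^-1%g u) by rewrite permKV.
rewrite mem_imset; last exact: perm_inj.
rewrite inE /rho !permK.
have -> : v = s (s^-1%g v) by rewrite permKV.
rewrite permK.
case: (eqVneq (s^-1%g u) (s^-1%g v)) => [->|H]; first by rewrite !ltnn eqxx.
rewrite (order_rr s H) permKV //.
Qed.

Lemma card_lt_ord n (i j : 'I_n) :
  #|[set k : 'I_n | k < i]| = #|[set k : 'I_n | k < j]| -> i = j.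
Proof.
wlog H : i j / i <= j.
  move=> W E; case: (leqP i j) => H; first exact: W.
  by apply/esym/W => //; exact: ltnW.
move=> E; apply/val_inj/eqP; rewrite eqn_leq H /=; rewrite leqNgt; apply/negP=> Hlt.
have : [set k : 'I_n | k < i] \proper [set k : 'I_n | k < j].
  apply/properP; split.
    by apply/subsetP => k; rewrite !inE => Hk; exact: ltn_trans Hk Hlt.
  by exists i; rewrite !inE // ltnn.
by move/proper_card; rewrite E ltnn.
Qed.

Lemma rho_inj n (s1 s2 : 'S_n) : rho s1 =1 rho s2 -> s1 = s2.
Proof.
move=> E.
have Hv : forall v, s1^-1%g v = s2^-1%g v.
  move=> v; apply: card_lt_ord.
  have e1 := card_imset [set j : 'I_n | j < s1^-1%g v] (@perm_inj _ s1).
  have e2 := card_imset [set j : 'I_n | j < s2^-1%g v] (@perm_inj _ s2).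
  rewrite -vset_img in e1; rewrite -vset_img in e2.
  rewrite -e1 -e2.
  by apply: eq_card => u; rewrite !inE !E.
have : s1^-1%g = s2^-1%g by apply/permP.
by move/invg_inj.
Qed.

Definition code K n (s : 'S_n) : {ffun 'I_n -> 'I_K.+1} :=
  [ffun u => inord (rho s u)].

Lemma few_card K n :
  #|[set s : 'S_n | rr s n <= K]| <= K.+1 ^ n.
Proof.
have -> : K.+1 ^ n = #|{ffun 'I_n -> 'I_K.+1}| by rewrite card_ffun !card_ord.
apply: (@leq_card_in _ _ (@code K n)) => s1 s2; rewrite !inE => H1 H2 E.
apply: rho_inj => u.
have := congr1 (fun f : {ffun 'I_n -> 'I_K.+1} => val (f u)) E; rewrite /= !ffunE.
have B : forall s : 'S_n, rr s n <= K -> rho s u < K.+1.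
  move=> s Hs; rewrite ltnS; apply: leq_trans Hs; apply: rr_mono; exact: ltnW.
by rewrite !inordK ?B.
Qed.

Definition decs n (P : {set 'I_n}) (s : 'S_n) :=
  [forall x in P, forall y in P, (x < y) ==> (s y < s x)].

Definition rk n (P : {set 'I_n}) (x : 'I_n) := #|[set z in P | z < x]|.

Lemma rk_lt n (P : {set 'I_n}) (a b : 'I_n) : a \in P -> a < b -> rk P a < rk P b.
Proof.
move=> Ha Hab; apply: proper_card; apply/properP; split.
  by apply/subsetP => z; rewrite !inE => /andP [-> Hz]; exact: ltn_trans Hz Hab.
by exists a; rewrite !inE ?Ha ?Hab // ltnn andbF.
Qed.

Lemma incr_id n (P : {set 'I_n}) (t : 'S_n) : perm_on P t ->
  (forall x y, x \in P -> y \in P -> x < y -> t x < t y) -> t = 1%g.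
Proof.
move=> Ht Hinc; apply/permP => x; rewrite perm1.
case: (boolP (x \in P)) => Hx; last exact: out_perm Ht Hx.
have Htx : t x \in P by rewrite (perm_closed _ Ht).
have E : rk P (t x) = rk P x.
  rewrite /rk -[RHS](card_imset _ (@perm_inj _ t)); apply: eq_card => w.
  apply/idP/idP.
  - rewrite !inE => /andP [Hw Hwl].
    have -> : w = t ((t^-1)%g w) by rewrite permKV.
    apply: imset_f; rewrite inE.
    have Hz : (t^-1)%g w \in P by rewrite (perm_closed _ (perm_onV Ht)).
    rewrite Hz /=; rewrite ltnNge; apply/negP; rewrite leq_eqVlt => /orP [/eqP E|H].
      by move/val_inj: E => E; rewrite E permKV ltnn in Hwl.
    by have := Hinc _ _ Hx Hz H; rewrite permKV; lia.
  - case/imsetP => z; rewrite !inE => /andP [Hz Hzx] ->.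
    by rewrite (perm_closed _ Ht) Hz /=; exact: Hinc.
apply/val_inj/eqP; case: (ltngtP (t x) x) => // H.
- by have := rk_lt Htx H; rewrite E ltnn.
- by have := rk_lt Hx H; rewrite E ltnn.
Qed.

Lemma dec_count n (P : {set 'I_n}) :
  #|[set s : 'S_n | decs P s]| * #|P|`! <= n`!.
Proof.
rewrite -card_perm -(cardsE (perm_on P)) -cardsX -card_Sn.
set D := setX _ _.
rewrite -(@card_in_imset _ _ (fun p : 'S_n * 'S_n => (p.2 * p.1)%g) D); last first.
  case=> [p1 q1] [p2 q2]; rewrite !inE /= => /andP [Hp1 Hq1] /andP [Hp2 Hq2] E.
  set tau := (q1^-1 * q2)%g.
  have Ht : perm_on P tau by apply: perm_onM => //; exact: perm_onV.
  have Hp : forall y, p1 y = p2 (tau y).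
    move=> y; move/permP: E => /(_ ((q1^-1)%g y)); rewrite (permM q1 p1) (permM q2 p2) permKV.
    by move=> ->; rewrite /tau permM.
  have T1 : tau = 1%g.
    apply: (incr_id Ht) => x y Hx Hy Hxy.
    have Htx : tau x \in P by rewrite (perm_closed _ Ht).
    have Hty : tau y \in P by rewrite (perm_closed _ Ht).
    case: (ltngtP (tau x) (tau y)) => // H.
    - move/forall_inP: Hp1 => /(_ x Hx) /forall_inP /(_ y Hy) /implyP /(_ Hxy).
      move/forall_inP: Hp2 => /(_ _ Hty) /forall_inP /(_ _ Htx) /implyP /(_ H).
      rewrite !Hp; lia.
    - by move/val_inj/perm_inj: H => H; rewrite H ltnn in Hxy.
  have Ep : p1 = p2 by apply/permP => y; rewrite Hp T1 perm1.
  rewrite Ep in E *; congr (_, _).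
  by apply: (mulIg p2).
by apply: max_card.
Qed.

Lemma card_bigcup_le (I T : finType) (P : pred I) (F : I -> {set T}) :
  #|\bigcup_(i | P i) F i| <= \sum_(i | P i) #|F i|.
Proof.
elim/big_rec2: _ => [|i U m Pi IH]; first by rewrite cards0.
apply: leq_trans (leq_card_setU _ _) _; by rewrite leq_add2l.
Qed.

Definition Dec n t := [set s : 'S_n | [exists P : {set 'I_n}, (t <= #|P|) && decs P s]].

Lemma dec_bound n t : #|Dec n t| * t`! <= 2 ^ n * n`!.
Proof.
have H1 : Dec n t \subset \bigcup_(P : {set 'I_n} | t <= #|P|) [set s | decs P s].
  apply/subsetP => s; rewrite inE => /existsP [P /andP [HP Hs]].
  by apply/bigcupP; exists P => //; rewrite inE.
apply: leq_trans (leq_mul (leq_trans (subset_leq_card H1) (card_bigcup_le _ _)) (leqnn _)) _.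
rewrite big_distrl /=.
apply: leq_trans (_ : \sum_(P : {set 'I_n} | t <= #|P|) n`! <= _).
  apply: leq_sum => P HP; apply: leq_trans (dec_count P).
  by rewrite leq_mul2l leq_fact ?orbT.
apply: leq_trans (_ : \sum_(P : {set 'I_n}) n`! <= _).
  by rewrite [X in _ <= X](bigID (fun P : {set 'I_n} => t <= #|P|)) /= leq_addr.
rewrite sum_nat_const leq_mul2r; apply/orP; right.
have <- : #|powerset [set: 'I_n]| = 2 ^ n by rewrite card_powerset cardsT card_ord.
by apply: subset_leq_card; apply/subsetP => P _; rewrite powersetE subsetT.
Qed.

Definition Lm n (s : 'S_n) := [set l : 'I_n | [forall a : 'I_n, (a < l) ==> (s l < s a)]].
Definition Rm n (s : 'S_n) := [set c : 'I_n | [forall a : 'I_n, (c < a) ==> (s a < s c)]].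

Lemma decL n (s : 'S_n) : decs (Lm s) s.
Proof.
apply/forall_inP => x Hx; apply/forall_inP => y; rewrite inE => /forallP /(_ x).
by move=> /implyP H; apply/implyP.
Qed.

Lemma decR n (s : 'S_n) : decs (Rm s) s.
Proof.
apply/forall_inP => x; rewrite inE => /forallP Hx; apply/forall_inP => y Hy.
by apply/implyP => H; move/implyP: (Hx y); apply.
Qed.

Lemma rr_card n (s : 'S_n) : rr s n = #|[set b : 'I_n | asc s b]|.
Proof.
rewrite /rr big_mkord -sum1_card [RHS]big_mkcond /=.
by apply: eq_bigr => b _; rewrite inE; case: (asc s b).
Qed.

Lemma asc_cover n (s : 'S_n) : ~~ contains_1_23_4 s ->
  rr s n <= #|Lm s| + #|Rm s|.
Proof.
move=> Hs; rewrite rr_card; set A := [set b : 'I_n | asc s b].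
rewrite -(setID A (Lm s)).
apply: leq_trans (leq_card_setU _ _) _.
apply: leq_add; first by apply: subset_leq_card; exact: subsetIr.
rewrite -(card_imset _ (@ordS_inj n)).
apply: subset_leq_card; apply/subsetP => c /imsetP [b]; rewrite !inE.
move=> /andP [Hb HA] ->; apply/negPn/negP => HR.
move: HA; rewrite /asc => /andP [Hb1 Hasc].
have Eb : val (ordS b) = b.+1 by rewrite /= modn_small.
move/forallPn: Hb => [a]; rewrite negb_imply -leqNgt => /andP [Hab Hsa].
move/forallPn: HR => [d]; rewrite negb_imply -leqNgt => /andP [Hbc Hsc].
have Hsa' : s a < s b.
  move: Hsa; rewrite leq_eqVlt => /orP [/eqP /val_inj /perm_inj E|//].
  by rewrite E ltnn in Hab.
have Hsc' : s (ordS b) < s d.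
  move: Hsc; rewrite leq_eqVlt => /orP [/eqP /val_inj /perm_inj E|//].
  by rewrite E ltnn in Hbc.
apply/negP: Hs; apply/negPn.
apply/existsP; exists a; apply/existsP; exists b; apply/existsP; exists (ordS b).
apply/existsP; exists d.
rewrite Hab Eb eqxx Hbc Hsa' Hsc' /=.
by rewrite andbT -(pvE s b) -(pvE s (ordS b)) Eb.
Qed.

Lemma avoid_bound n t : 0 < t ->
  alpha_1_23_4 n * t`! <= (2 * t) ^ n * t`! + 2 ^ n * n`!.
Proof.
move=> Ht.
have Hsub : [set s : 'S_n | ~~ contains_1_23_4 s] \subset
            [set s : 'S_n | rr s n <= (2 * t).-1] :|: Dec n t.
  apply/subsetP => s; rewrite !inE => Hs.
  case: (leqP (rr s n) (2 * t).-1) => //= H.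
  have := asc_cover Hs => Hc.
  have E : (2*t).-1.+1 = 2*t by rewrite prednK // muln_gt0.
  have H' : 2 * t <= rr s n by rewrite -E.
  apply/existsP; case: (leqP t #|Lm s|) => HL.
    by exists (Lm s); rewrite HL decL.
  exists (Rm s); rewrite decR andbT; move: Hc H' HL; set x := #|Lm s|; set y := #|Rm s|; lia.
rewrite /alpha_1_23_4.
apply: leq_trans (leq_mul (leq_trans (subset_leq_card Hsub) (leq_card_setU _ _)) (leqnn _)) _.
rewrite mulnDl leq_add //; last exact: dec_bound.
rewrite leq_mul2r; apply/orP; right.
by have := few_card (2 * t).-1 n; rewrite prednK // muln_gt0.
Qed.

Section RealPart.
Local Open Scope R_scope.

Lemma INR_expn m k : INR (m ^ k)%N = INR m ^ k.
Proof.
elim: k => [|k IH]; first by rewrite expn0.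
by rewrite expnS -multE mult_INR IH.
Qed.

Lemma pow_exp x k : exp x ^ k = exp (INR k * x).
Proof.
elim: k => [|k IH]; first by rewrite /= Rmult_0_l exp_0.
rewrite -tech_pow_Rmult IH -exp_plus S_INR; f_equal; lra.
Qed.

Lemma succ_pow k : (0 < k)%N -> ((k.+1) ^ k <= 3 * k ^ k)%N.
Proof.
move=> Hk; apply/leP; apply: INR_le.
rewrite -multE mult_INR !INR_expn.
have Hk' : 0 < INR k by apply: lt_0_INR; apply/ltP.
have E : INR k.+1 = INR k * (1 + / INR k).
  rewrite S_INR; field; lra.
rewrite E Rpow_mult_distr [X in X <= _]Rmult_comm.
apply: Rmult_le_compat_r; first by apply: pow_le; lra.
apply: Rle_trans (_ : exp (/ INR k) ^ k <= _).
  apply: pow_incr; split; last exact: exp_ineq1_le.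
  have : 0 < / INR k by apply: Rinv_0_lt_compat.
  lra.
rewrite pow_exp Rinv_r; last lra.
have := exp_le_3; simpl; lra.
Qed.
End RealPart.

Lemma nn_bound n : n ^ n <= 3 ^ n * n`!.
Proof.
elim: n => [//|n IH].
case: n IH => [//|n] IH.
rewrite expnS factS.
have := succ_pow (ltn0Sn n) => H.
apply: leq_trans (leq_mul (leqnn _) H) _.
have : (n.+2) * (3 * n.+1 ^ n.+1) <= n.+2 * (3 * (3 ^ n.+1 * n.+1`!)).
  by rewrite leq_mul2l leq_mul2l IH orbT.
move=> H2; apply: leq_trans H2 _; rewrite !expnS; move: (3 ^ n) ((n.+1)`!) => a b; nia.
Qed.

Lemma fact_low T t : T <= t -> T ^ (t - T) <= t`!.
Proof.
elim: t => [|t IH]; first by rewrite leqn0 => /eqP ->.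
rewrite leq_eqVlt => /orP [/eqP ->|H]; first by rewrite subnn expn0 fact_gt0.
rewrite ltnS in H; rewrite subSn // expnS factS.
apply: leq_mul; [exact: leq_trans H (leqnSn _) | exact: IH].
Qed.

Lemma eventually d : 0 < d ->
  exists N, forall n, N <= n -> alpha_1_23_4 n * d ^ n <= n`!.
Proof.
move=> Hd.
set m := 12 * d; set M := 2 * d; set T := M ^ (2 * m).
have Hm : 0 < m by rewrite /m; lia.
have HM : 1 < M by rewrite /M; lia.
exists (m * (2 * T + 1)) => n Hn.
set t := n %/ m.
have Ht1 : 2 * T + 1 <= t by rewrite /t leq_divRL // mulnC.
have Ht : 0 < t by lia.
have Hn1 : n < t.+1 * m by exact: ltn_ceil.
have Hmt : t * m <= n by have := leq_divM n m.
have Hn0 : 0 < n.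
  have : 0 < m * (2 * T + 1) by rewrite muln_gt0 Hm; lia.
  lia.
have H1 : 2 * (2 * t * d) ^ n <= n`!.
  have A : 3 ^ n * (2 ^ n * (2 * t * d) ^ n) <= n ^ n.
    rewrite -!expnMn leq_exp2r //; rewrite /m in Hmt; lia.
  have B := nn_bound n.
  have C : 2 ^ n * (2 * t * d) ^ n <= n`!.
    have P3 : 0 < 3 ^ n by rewrite expn_gt0.
    by rewrite -(leq_pmul2l P3); exact: leq_trans A B.
  apply: leq_trans C; rewrite leq_mul2r; apply/orP; right.
  by rewrite -{1}(expn1 2) leq_pexp2l.
have H2 : 2 * M ^ n <= t`!.
  have A := fact_low (_ : T <= t); rewrite /T -expnM in A.
  apply: leq_trans (A _); last by lia.
  apply: leq_trans (_ : M ^ n.+1 <= _).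
    by rewrite expnS leq_mul2r HM orbT.
  apply: leq_pexp2l; first lia.
  have : t.+1 <= 2 * (t - T) by lia.
  move=> E; apply: leq_trans Hn1 _.
  have := leq_mul E (leqnn m); lia.
have K := avoid_bound n Ht.
have Hf : 0 < t`! := fact_gt0 t.
move: K H1 H2 Hf; rewrite /M.
have E1 : (2 * t * d) ^ n = (2 * t) ^ n * d ^ n by rewrite expnMn.
have E2 : (2 * d) ^ n = 2 ^ n * d ^ n by rewrite expnMn.
rewrite E1 E2.
move: (alpha_1_23_4 n) ((2 * t) ^ n) (d ^ n) (t`!) (2 ^ n) (n`!) => a p dd f q g.
move=> K H1 H2 Hf.
have K2 : a * dd * f <= p * dd * f + q * dd * g.
  have := leq_mul K (leqnn dd); lia.
rewrite -(leq_pmul2r Hf); nia.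
Qed.

Lemma alpha_pos n : (0 < alpha_1_23_4 n)%N.
Proof.
apply/card_gt0P; exists (perm (@rev_ord_inj n)); rewrite inE.
apply/existsPn => a; apply/existsPn => b; apply/existsPn => b1; apply/existsPn => c.
rewrite !permE /=.
case Hab: (a < b)%N => //=.
case: (val b1 == (val b).+1) => //=; case: (b1 < c)%N => //=.
have : (n - b.+1 < n - a.+1)%N.
  have := ltn_ord b; move: Hab; clear; move=> H1 H2.
  lia.
by move=> H; apply/negP => /and3P [H' _ _]; lia.
Qed.

Open Scope R_scope.

Theorem mainTheorem11 :
  Un_cv (fun n : nat =>
           Rpower (INR (alpha_1_23_4 n) / INR (n`!)%nat) (/ INR n)) 0.
Proof.
move=> eps Heps.
have [d [Hd Hd0]] := archimed_cor1 _ Heps.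
have Hd1 : (0 < d)%N by apply/ltP.
have [N HN] := eventually Hd1.
exists (N.+1) => n Hn.
have HnN : (N <= n)%N by apply/leP; lia.
have Hn0 : 0 < INR n by apply: lt_0_INR; lia.
have Hdr : 0 < INR d by apply: lt_0_INR; apply/ltP.
have Ha : 0 < INR (alpha_1_23_4 n) by apply: lt_0_INR; apply/ltP; exact: alpha_pos.
have Hf : 0 < INR (n`!) by apply: lt_0_INR; apply/ltP; exact: fact_gt0.
have Hx : 0 < INR (alpha_1_23_4 n) / INR (n`!) by apply: Rdiv_lt_0_compat.
have Hb : INR (alpha_1_23_4 n) / INR (n`!) <= (/ INR d) ^ n.
  have K := HN n HnN.
  have K' : INR (alpha_1_23_4 n) * INR d ^ n <= INR (n`!).
    rewrite -INR_expn -mult_INR; apply: le_INR; apply/leP; exact: K.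
  have HD : 0 < INR d ^ n by apply: pow_lt.
  rewrite pow_inv.
  set a := INR (alpha_1_23_4 n) in K' *; set f := INR (n`!) in K' Hf *.
  set D := INR d ^ n in K' HD *.
  replace (a / f) with ((a * D) * / (f * D)) by (field; lra).
  replace (/ D) with (f * / (f * D)) by (field; lra).
  apply: Rmult_le_compat_r => //.
  left; apply: Rinv_0_lt_compat; nra.
have Hp : 0 < Rpower (INR (alpha_1_23_4 n) / INR (n`!)) (/ INR n) by apply: exp_pos.
rewrite /R_dist Rminus_0_r Rabs_right; last lra.
apply: Rle_lt_trans Hd.
have Hi : 0 < / INR n by apply: Rinv_0_lt_compat.
have Hid : 0 < / INR d by apply: Rinv_0_lt_compat.
have H1 : Rpower (INR (alpha_1_23_4 n) / INR (n`!)) (/ INR n) <=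
          Rpower ((/ INR d) ^ n) (/ INR n).
  by apply: Rle_Rpower_l; [left | split].
apply: Rle_trans H1 _.
rewrite -Rpower_pow // Rpower_mult Rinv_r; last lra.
rewrite Rpower_1 //; lra.
Qed.
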